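(* A function $f\in\mathcal{L}(G)$ is positive semi-definite (respectively positive definite) if and only if $\hat{f}_k\ge 0$ (respectively $\hat{f}_k>0$) for all $k\in\{1,\dots,n\}$. The corresponding kernel $K_f(v_i,v_j)=(\mathbf{C}_{e_j}f)(v_i)$ has the decomposition $$K_f(v,w)=\sum_{k=1}^n\hat{f}_k\,u_k(v)\,u_k(w)\quad(v,w\in V).$$ Further: (i) $f\in\mathcal{A}_{\mathbf{L}}$ and $f$ is positive semi-definite if and only if $\hat{f}_k\ge0$ for all $k$ and $\hat{f}_k=\hat{f}_{k'}$ whenever $\lambda_k=\lambda_{k'}$; (ii) $f\in\mathcal{B}_M$ and $f$ is positive semi-definite if and only if $\hat{f}_k\ge 0$ for all $k$ and $\hat{f}_k=0$ for all $k>M$; (iii) $f$ is conditionally positive definite with respect to the subspace $\mathcal{Y}=\mathrm{span}\{u_{k_1},\dots,u_{k_K}\}$ if and only if $\hat{f}_{k_1}>0,\dots,\hat{f}_{k_K}>0$.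
   Context: Let $G$ be a graph with vertex set $V=\{v_1,\dots,v_n\}$ and a symmetric, entrywise non-negative weighted adjacency matrix $\mathbf{A}$, degree matrix $\mathbf{D}=\mathrm{diag}(\sum_k\mathbf{A}_{ik})$ (assumed positive), and normalized Laplacian $\mathbf{L}=\mathbf{I}_n-\mathbf{D}^{-1/2}\mathbf{A}\mathbf{D}^{-1/2}$. Signals $x:V\to\mathbb{R}$ are identified with vectors in $\mathbb{R}^n$ (space $\mathcal{L}(G)$), and $e_1,\dots,e_n$ is the standard basis. Fix an orthonormal eigendecomposition $\mathbf{L}=\mathbf{U}\,\mathrm{diag}(\lambda_1,\dots,\lambda_n)\mathbf{U}^\intercal$, $\lambda_1\le\dots\le\lambda_n$, with columns $u_1,\dots,u_n$ of $\mathbf{U}$. Graph Fourier transform: $\hat{x}=\mathbf{U}^\intercal x$. Convolution operator: $\mathbf{C}_x=\mathbf{U}\,\mathrm{diag}(\hat{x})\,\mathbf{U}^\intercal$. Unit $f_{\mathbb{1}}=\sum_k u_k$; $\mathcal{A}_{\mathbf{L}}=\mathrm{span}\{f_{\mathbb{1}},\mathbf{L}f_{\mathbb{1}},\dots,\mathbf{L}^{n-1}f_{\mathbb{1}}\}$; for $M\le n$, $\mathcal{B}_M=\mathrm{span}\{u_1,\dots,u_M\}$. For $f\in\mathcal{L}(G)$ let $\mathbf{K}_f\in\mathbb{R}^{n\times n}$ have entries $(\mathbf{K}_f)_{ij}=(\mathbf{C}_{e_j}f)(v_i)$. The function $f$ is called positive semi-definite (positive definite) if $\mathbf{K}_f$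 is symmetric and positive semi-definite (symmetric and strictly positive definite), and conditionally positive definite with respect to a subspace $\mathcal{Y}$ if $y^\intercal\mathbf{K}_f y>0$ for all nonzero $y\in\mathcal{Y}$. *)

(* Defs.v *)
(* Vertices v_1..v_n are indexed by 'I_n (0-based: v_{i+1} <-> i). *)
From mathcomp Require Import all_boot all_order all_algebra.
Set Implicit Arguments. Unset Strict Implicit. Unset Printing Implicit Defensive.
Import Order.TTheory GRing.Theory Num.Theory.
Local Open Scope ring_scope.

Section GraphFourier.
Variable R : rcfType.

Definition deg n (A : 'M[R]_n) (i : 'I_n) : R := \sum_(k < n) A i k.

Definition Dinvsqrt n (A : 'M[R]_n) : 'M[R]_n :=
  diag_mx (\row_i (Num.sqrt (deg A i))^-1).

Definition normLap n (A : 'M[R]_n) : 'M[R]_n :=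
  1%:M - Dinvsqrt A *m A *m Dinvsqrt A.

Definition gft n (U : 'M[R]_n) (x : 'cV[R]_n) : 'cV[R]_n := U^T *m x.

Definition convop n (U : 'M[R]_n) (x : 'cV[R]_n) : 'M[R]_n :=
  U *m diag_mx (gft U x)^T *m U^T.

Definition ebasis n (j : 'I_n) : 'cV[R]_n := delta_mx j 0.

Definition kernelK n (U : 'M[R]_n) (f : 'cV[R]_n) : 'M[R]_n :=
  \matrix_(i, j) (convop U (ebasis j) *m f) i 0.

Definition qform n (M : 'M[R]_n) (y : 'cV[R]_n) : R := (y^T *m M *m y) 0 0.

Definition psd_fun n (U : 'M[R]_n) (f : 'cV[R]_n) : Prop :=
  (kernelK U f)^T = kernelK U f /\ forall y : 'cV[R]_n, 0 <= qform (kernelK U f) y.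

Definition pd_fun n (U : 'M[R]_n) (f : 'cV[R]_n) : Prop :=
  (kernelK U f)^T = kernelK U f /\
  forall y : 'cV[R]_n, y != 0 -> 0 < qform (kernelK U f) y.

Definition cpd_fun n (U : 'M[R]_n) (Y : 'cV[R]_n -> Prop) (f : 'cV[R]_n) : Prop :=
  forall y, Y y -> y != 0 -> 0 < qform (kernelK U f) y.

Definition unitf n (U : 'M[R]_n) : 'cV[R]_n := \sum_(k < n) col k U.

Definition in_AL n (L U : 'M[R]_n) (f : 'cV[R]_n) : Prop :=
  exists c : 'I_n -> R, f = \sum_(i < n) c i *: (L ^+ i *m unitf U).

Definition in_span_U n (U : 'M[R]_n) (S : {set 'I_n}) (y : 'cV[R]_n) : Prop :=
  exists c : 'I_n -> R, y = \sum_(k in S) c k *: col k U.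

(* B_M = span{u_1,...,u_M}  (0-based indices k < M) *)
Definition in_BM n (U : 'M[R]_n) (M : nat) (f : 'cV[R]_n) : Prop :=
  in_span_U U [set k : 'I_n | (k < M)%N] f.

End GraphFourier.

(* Main.v *)
Require Import Defs.
From mathcomp Require Import all_boot all_order all_algebra.
From mathcomp Require Import ring lra.
Import Order.TTheory GRing.Theory Num.Theory.
Set Implicit Arguments. Unset Strict Implicit.
Local Open Scope ring_scope.

Lemma interp (R : rcfType) (n : nat) (lam v : 'I_n -> R) :
  (forall k k', lam k = lam k' -> v k = v k') ->
  exists c : 'I_n -> R, forall k, v k = \sum_(i < n) c i * lam k ^+ i.
Proof.
move=> Hv.
pose N k := #|[pred j | lam j == lam k]|.
pose ell k := \prod_(j | lam j != lam k) ('X - (lam j)%:P).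
pose q := \sum_k (v k / (N k)%:R / (ell k).[lam k]) *: ell k.
pose P := \prod_(j < n) ('X - (lam j)%:P).
have P0 : P != 0 by apply: monic_neq0; apply: monic_prod_XsubC.
have sP : size P = n.+1 by rewrite size_prod_XsubC; have := size_enum_ord n; rewrite enumT => ->.
pose r := q %% P.
have sr : (size r <= n)%N by have := ltn_modp q P; rewrite P0 sP ltnS.
exists (fun i => r`_i) => m.
rewrite -horner_coef_wide //.
have -> : r.[lam m] = q.[lam m].
  rewrite [in RHS](divp_eq q P) hornerD hornerM.
  have -> : P.[lam m] = 0.
    by rewrite horner_prod (bigD1 m) //= !hornerE subrr mul0r.
  by rewrite mulr0 add0r.
have ellk k : (ell k).[lam k] != 0.
  rewrite horner_prod; apply/prodf_neq0 => j Hj.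
  by rewrite !hornerE subr_eq0 eq_sym.
have ellm k : lam k != lam m -> (ell k).[lam m] = 0.
  move=> Hk; rewrite horner_prod (bigD1 m) //= 1?eq_sym //.
  by rewrite !hornerE subrr mul0r.
have Nm : (N m)%:R != 0 :> R.
  rewrite pnatr_eq0 -lt0n; apply/card_gt0P; exists m; by rewrite inE /=.
rewrite horner_sum (bigID (fun k => lam k == lam m)) /=.
rewrite [X in _ + X]big1 ?addr0; last first.
  by move=> k Hk; rewrite hornerZ ellm // mulr0.
rewrite (eq_bigr (fun _ => v m / (N m)%:R)); last first.
  move=> k /eqP Hk; have dK (a b : R) : b != 0 -> a / b * b = a by move=> hb; apply: divfK.
  rewrite hornerZ -Hk (dK _ _ (ellk k)).
  rewrite (Hv _ _ Hk).
  congr (_ / _%:R); rewrite /N; apply: eq_card => j; by rewrite !inE Hk.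
rewrite sumr_const.
have -> : #|(fun i => lam i == lam m)| = N m by apply: eq_card => j; rewrite !inE.
by rewrite -(mulr_natr (v m / _)) divfK.
Qed.
Section M.
Variables (R : rcfType) (n : nat) (U : 'M[R]_n).
Hypothesis UtU : U^T *m U = 1%:M.

Lemma UUt : U *m U^T = 1%:M.
Proof. exact: mulmx1C. Qed.

Lemma Ut_col k : U^T *m col k U = delta_mx k 0.
Proof. by rewrite colE mulmxA UtU mul1mx. Qed.

Lemma kernelE f i j :
  kernelK U f i j = \sum_(k < n) gft U f k 0 * U i k * U j k.
Proof.
rewrite /kernelK mxE /convop /gft -!mulmxA mxE.
apply: eq_bigr => k _.
rewrite mul_diag_mx mxE mxE /ebasis -colE !mxE.
by ring.
Qed.

Lemma kernelM f : kernelK U f = U *m diag_mx (gft U f)^T *m U^T.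
Proof.
apply/matrixP => i j; rewrite kernelE mxE.
apply: eq_bigr => k _; rewrite mul_mx_diag !mxE.
by rewrite [U i k * _]mulrC.
Qed.

Lemma qformE (d : 'rV[R]_n) y :
  qform (U *m diag_mx d *m U^T) y = \sum_(k < n) d 0 k * ((U^T *m y) k 0)^+2.
Proof.
rewrite /qform.
have -> : y^T *m (U *m diag_mx d *m U^T) *m y
   = (U^T *m y)^T *m diag_mx d *m (U^T *m y).
  by rewrite trmx_mul trmxK !mulmxA.
rewrite mxE; apply: eq_bigr => k _.
by rewrite mul_mx_diag !mxE expr2; ring.
Qed.

Lemma qform_col (d : 'rV[R]_n) k :
  qform (U *m diag_mx d *m U^T) (col k U) = d 0 k.
Proof.
rewrite qformE Ut_col (bigD1 k) //= big1 ?addr0.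
  by rewrite !mxE !eqxx expr1n mulr1.
by move=> j /negbTE Hj; rewrite !mxE Hj /= expr0n mulr0.
Qed.

Lemma qform_pos (d : 'rV[R]_n) (z : 'cV[R]_n) :
  (forall k, z k 0 != 0 -> 0 < d 0 k) -> z != 0 ->
  0 < \sum_(k < n) d 0 k * (z k 0)^+2.
Proof.
move=> Hd Hz.
case: (pickP (fun k => z k 0 != 0)) => [k Hk | H]; last first.
  case/eqP: Hz; apply/matrixP => i j; rewrite (ord1 j) mxE.
  by move: (H i) => /= /negbFE /eqP.
have term l : 0 <= d 0 l * z l 0 ^+ 2.
  case: (boolP (z l 0 == 0)) => [/eqP -> | Hl].
    by rewrite expr0n mulr0.
  by apply: mulr_ge0; [apply: ltW; apply: Hd | apply: sqr_ge0].
rewrite (bigD1 k) //=.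
have h1 : 0 < d 0 k * z k 0 ^+ 2.
  apply: mulr_gt0; first exact: Hd.
  by rewrite lt0r sqrf_eq0 Hk sqr_ge0.
have h2 : 0 <= \sum_(i < n | i != k) d 0 i * z i 0 ^+ 2.
  by apply: sumr_ge0 => i _; apply: term.
lra.
Qed.

Lemma qform_ge0 (d : 'rV[R]_n) y :
  (forall k, 0 <= d 0 k) -> 0 <= qform (U *m diag_mx d *m U^T) y.
Proof.
move=> H; rewrite qformE; apply: sumr_ge0 => k _.
by apply: mulr_ge0 => //; apply: sqr_ge0.
Qed.

Lemma sym_UDU (d : 'rV[R]_n) : (U *m diag_mx d *m U^T)^T = U *m diag_mx d *m U^T.
Proof. by rewrite !trmx_mul trmxK tr_diag_mx mulmxA. Qed.

Lemma Ucol_sum (x : 'cV[R]_n) : U *m x = \sum_(k < n) x k 0 *: col k U.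
Proof.
apply/matrixP => i j; rewrite (ord1 j) mxE summxE.
apply: eq_bigr => k _; by rewrite !mxE mulrC.
Qed.

Lemma span_entry (S : {set 'I_n}) (c : 'I_n -> R) m :
  (U^T *m \sum_(k in S) c k *: col k U) m 0 = if m \in S then c m else 0.
Proof.
rewrite mulmx_sumr summxE.
under eq_bigr => k _ do rewrite -scalemxAr Ut_col !mxE.
case: (boolP (m \in S)) => Hm.
  rewrite (bigD1 m) //= eqxx mulr1 big1 ?addr0 //.
  by move=> k /andP[_ /negbTE]; rewrite eq_sym => ->; rewrite mulr0.
rewrite big1 // => k Hk.
have -> : (m == k) = false by apply/negbTE; apply: contraNneq Hm => ->.
by rewrite mulr0.
Qed.

Lemma col_neq0 k : col k U != 0.
Proof.
apply/eqP => H; have := Ut_col k; rewrite H mulmx0 => /matrixP /(_ k 0).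
by rewrite !mxE !eqxx /= => /eqP; rewrite eq_sym oner_eq0.
Qed.

Lemma Uty_neq0 (y : 'cV[R]_n) : y != 0 -> U^T *m y != 0.
Proof.
apply: contraNneq => H.
by rewrite -[y]mul1mx -UUt -mulmxA H mulmx0.
Qed.

Lemma f_eq f : f = U *m gft U f.
Proof. by rewrite /gft mulmxA UUt mul1mx. Qed.


Variables (L : 'M[R]_n) (lambda : 'I_n -> R).
Hypothesis HL : L = U *m diag_mx (\row_k lambda k) *m U^T.

Lemma L_mulU (w : 'cV[R]_n) : L *m (U *m w) = U *m \col_k (lambda k * w k 0).
Proof.
rewrite HL -!mulmxA [U^T *m _]mulmxA UtU mul1mx mul_diag_mx.
by congr (_ *m _); apply/matrixP => i j; rewrite (ord1 j) !mxE.
Qed.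

Lemma Lpow_U i (w : 'cV[R]_n) :
  L ^+ i *m (U *m w) = U *m \col_k (lambda k ^+ i * w k 0).
Proof.
elim: i => [|i IH].
  rewrite expr0 -idmxE mul1mx; congr (_ *m _).
  by apply/matrixP => k j; rewrite (ord1 j) !mxE mul1r.
rewrite exprS -mulmxE -mulmxA IH L_mulU; congr (_ *m _).
by apply/matrixP => k j; rewrite (ord1 j) !mxE exprS mulrA.
Qed.

Lemma unitfE : unitf U = U *m const_mx 1.
Proof.
apply/matrixP => i j; rewrite (ord1 j) /unitf summxE mxE.
by apply: eq_bigr => k _; rewrite !mxE mulr1.
Qed.

Lemma ALform (c : 'I_n -> R) :
  \sum_(i < n) c i *: (L ^+ i *m unitf U)
  = U *m \col_k (\sum_(i < n) c i * lambda k ^+ i).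
Proof.
under eq_bigr => i _ do rewrite unitfE Lpow_U scalemxAr.
rewrite -mulmx_sumr; congr (_ *m _).
apply/matrixP => k j; rewrite (ord1 j) summxE !mxE.
by apply: eq_bigr => i _; rewrite !mxE mulr1.
Qed.

End M.


Theorem theorem1 (R : rcfType) (n : nat) (A : 'M[R]_n)
  (A_sym : A^T = A) (A_nonneg : forall i j, 0 <= A i j)
  (deg_pos : forall i, 0 < deg A i)
  (U : 'M[R]_n) (lambda : 'I_n -> R)
  (U_orth : U^T *m U = 1%:M)
  (lambda_sorted : forall i j : 'I_n, (i <= j)%N -> lambda i <= lambda j)
  (L_eig : normLap A = U *m diag_mx (\row_k lambda k) *m U^T) :
  forall f : 'cV[R]_n,
    (psd_fun U f <-> forall k, 0 <= gft U f k 0) /\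
    (pd_fun U f <-> forall k, 0 < gft U f k 0) /\
    (forall i j, kernelK U f i j = \sum_(k < n) gft U f k 0 * U i k * U j k) /\
    (in_AL (normLap A) U f /\ psd_fun U f <->
       (forall k, 0 <= gft U f k 0) /\
       (forall k k', lambda k = lambda k' -> gft U f k 0 = gft U f k' 0)) /\
    (forall M : nat, (M <= n)%N ->
       (in_BM U M f /\ psd_fun U f <->
         (forall k, 0 <= gft U f k 0) /\
         (forall k : 'I_n, (M <= k)%N -> gft U f k 0 = 0))) /\
    (forall S : {set 'I_n},
       cpd_fun U (in_span_U U S) f <-> forall k, k \in S -> 0 < gft U f k 0).
Proof.
move=> f.
have KM := kernelM U f.
have P1 : psd_fun U f <-> forall k, 0 <= gft U f k 0.
  split.
    by case=> _ H k; have := H (col k U); rewrite KM qform_col // mxE.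
  move=> H; split; first by rewrite KM sym_UDU.
  by move=> y; rewrite KM; apply: qform_ge0 => k; rewrite mxE.
split; first exact: P1.
split.
  split.
    case=> _ H k; have := H (col k U) (col_neq0 U_orth k).
    by rewrite KM qform_col // mxE.
  move=> H; split; first by rewrite KM sym_UDU.
  move=> y hy; rewrite KM qformE; apply: qform_pos.
    by move=> k _; rewrite mxE; apply: H.
  exact: Uty_neq0.
split; first exact: kernelE.
split.
  split.
    case=> [[c Hc] Hpsd]; split; first by apply/P1.
    move=> k k' Hkk'.
    have : gft U f = \col_k (\sum_(i < n) c i * lambda k ^+ i).
      by rewrite /gft Hc (ALform U_orth L_eig) mulmxA U_orth mul1mx.
    by move=> /matrixP H; rewrite !H !mxE Hkk'.
  case=> H1 H2; split; last by apply/P1.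
  have [c Hc] := interp H2.
  exists c; rewrite (ALform U_orth L_eig) {1}(f_eq U_orth f); congr (_ *m _).
  by apply/matrixP => k j; rewrite (ord1 j) [RHS]mxE -Hc.
split.
  move=> M _; split.
    case=> [[c Hc] Hpsd]; split; first by apply/P1.
    by move=> k Hk; rewrite /gft Hc span_entry // inE ltnNge Hk.
  case=> H1 H2; split; last by apply/P1.
  exists (fun k => gft U f k 0).
  rewrite {1}(f_eq U_orth f) Ucol_sum [RHS]big_mkcond /=.
  apply: eq_bigr => k _; case: ifP => //.
  by rewrite inE => /negbT; rewrite -leqNgt => Hk; rewrite H2 // scale0r.
move=> S; split.
  move=> H k Hk.
  have Hy : in_span_U U S (col k U).
    exists (fun j => (j == k)%:R).
    rewrite (bigD1 k) //= eqxx scale1r big1 ?addr0 //.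
    by move=> j /andP[_ /negbTE ->]; rewrite scale0r.
  by have := H (col k U) Hy (col_neq0 U_orth k); rewrite KM qform_col // mxE.
move=> H y [c Hc] hy; rewrite KM qformE; apply: qform_pos.
  move=> m; rewrite Hc span_entry // mxE; case: ifP => Hm.
    by move=> _; apply: H.
  by rewrite eqxx.
exact: Uty_neq0.
Qed.
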